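(* Let $h_1,h_2,\dots$ be real-valued i.i.d. random variables, let $(h_n^+)_n$ and $(h_n^-)_n$ be independent copies of $(h_n)_n$, and set $h_n^{sym}=h_n^+-h_n^-$. For a sequence $(k_n)$ of i.i.d. random variables (either $(h_n)$ or $(h_n^{sym})$) define, for $\varepsilon>0$, $N\in\mathbb N$: $d_N=\mathbb E(k_1\mathbf 1_{\{|k_1|\le N\}})$, $\pi_N(\varepsilon)=\mathbb P\big(\big|\frac1N\sum_{n=1}^Nk_n-d_N\big|>\varepsilon\big)$, $\tau_N(\varepsilon)=N\,\mathbb P(|k_1|>\varepsilon N)$, $\sigma_N(\varepsilon)=\frac1N\mathbb E(k_1^2\mathbf 1_{\{|k_1|\le\varepsilon N\}})$, $v_N(\varepsilon)=\frac1N\mathrm{Var}(k_1\mathbf 1_{\{|k_1|\le\varepsilon N\}})$; write these as $\pi_N,\tau_N,\sigma_N,v_N$ (with argument $\varepsilon$, and omitted argument meaning $\varepsilon=1$) for $(h_n)$ and as $\pi^{sym}_N,\tau^{sym}_N,\sigma^{sym}_N,v^{sym}_N$ for $(h^{sym}_n)$. Then for all sufficiently large $N\in\mathbb N$: $v_N\le2\,v^{sym}_{2N}=2\,\sigma^{sym}_{2N}$, $\tau_N\le4\,\tau^{sym}_N(1/2)$, and $\pi_N\ge\frac12\pi^{sym}_N(2)$. *)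

(* Defs.v *)
From HB Require Import structures.
From mathcomp Require Import all_boot all_order all_algebra.
From mathcomp Require Import all_classical all_reals all_analysis.
Set Implicit Arguments. Unset Strict Implicit. Unset Printing Implicit Defensive.
Import Order.TTheory GRing.Theory Num.Theory.
Local Open Scope classical_set_scope.
Local Open Scope ring_scope.

Section defs.
Context {d : measure_display} {T : measurableType d} {R : realType}.
Variable P : probability T R.

Definition mutually_independent {I : eqType} (X : I -> T -> R) : Prop :=
  forall (s : seq I) (B : I -> set R), uniq s ->
    (forall i, measurable (B i)) ->
    P (\big[setI/setT]_(i <- s) (X i @^-1` B i)) =
    (\prod_(i <- s) P (X i @^-1` B i))%E.

Definition same_law (X Y : T -> R) : Prop :=
  forall B : set R, measurable B -> P (X @^-1` B) = P (Y @^-1` B).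

Definition iid {I : eqType} (X : I -> T -> R) : Prop :=
  (forall i, measurable_fun setT (X i)) /\ mutually_independent X /\
  (forall i j, same_law (X i) (X j)).

Definition trunc (k : T -> R) (c : R) : T -> R :=
  fun w => if `|k w| <= c then k w else 0.

(* The quantities, for a sequence k (k 0 plays the role of k_1). *)
Definition d_N (k : nat -> T -> R) (N : nat) : R :=
  fine ('E_P[trunc (k 0%N) N%:R])%E.

Definition pi_N (k : nat -> T -> R) (N : nat) (eps : R) : \bar R :=
  P [set w | (eps < `| N%:R^-1 * (\sum_(n < N) k n w) - d_N k N |)%R].

Definition tau_N (k : nat -> T -> R) (N : nat) (eps : R) : \bar R :=
  (N%:R%:E * P [set w | (eps * N%:R < `|k 0%N w|)%R])%E.

Definition sigma_N (k : nat -> T -> R) (N : nat) (eps : R) : \bar R :=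
  ((N%:R^-1)%:E *
    'E_P[fun w => if (`|k 0%N w| <= eps * N%:R)%R then (k 0%N w ^+ 2)%R else 0%R])%E.

Definition v_N (k : nat -> T -> R) (N : nat) (eps : R) : \bar R :=
  ((N%:R^-1)%:E * 'V_P[trunc (k 0%N) (eps * N%:R)])%E.

End defs.

(* Main.v *)
Require Import Defs.
From HB Require Import structures.
From mathcomp Require Import all_boot all_order all_algebra.
From mathcomp Require Import all_classical all_reals all_analysis.
From mathcomp Require Import ring lra.
From mathcomp Require Import measurable_realfun.
Import Order.TTheory GRing.Theory Num.Theory.
Local Open Scope classical_set_scope.
Local Open Scope ring_scope.
Set Implicit Arguments. Unset Strict Implicit. Unset Printing Implicit Defensive.

Section ExTools.
Context {d : measure_display} {T : measurableType d} {R : realType}.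
Variable P : probability T R.

Definition mb (f : T -> R) :=
  measurable_fun setT f /\ exists M : R, forall x, `|f x| <= M.

Definition Ex (f : T -> R) : R := fine (\int[P]_w (f w)%:E)%E.

Lemma mb_int f : mb f -> P.-integrable setT (EFin \o f).
Proof.
case=> mf [M HM]; apply: measurable_bounded_integrable => //.
  by apply: (le_lt_trans (probability_le1 P measurableT)); rewrite ltry.
exists M; split; first exact: num_real.
move=> x Mx y _ /=; apply: le_trans (HM y) _; exact: ltW.
Qed.

Lemma Ex_int f : mb f -> (\int[P]_w (f w)%:E)%E = (Ex f)%:E.
Proof. by move=> /mb_int/integrable_fin_num => /(_ measurableT) /fineK. Qed.

Lemma mbD f g : mb f -> mb g -> mb (f \+ g).
Proof.
move=> [mf [M HM]] [mg [K HK]]; split; first exact: measurable_realfun.measurable_funD.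
exists (M + K) => x; apply: le_trans (ler_normD _ _) _; exact: lerD.
Qed.

Lemma mbN f : mb f -> mb (fun x => - f x).
Proof.
move=> [mf [M HM]]; split; first exact: measurableT_comp.
by exists M => x; rewrite normrN.
Qed.

Lemma mbB f g : mb f -> mb g -> mb (f \- g).
Proof. by move=> mf mg; apply: (mbD mf (mbN mg)). Qed.

Lemma mbM f g : mb f -> mb g -> mb (f \* g).
Proof.
move=> [mf [M HM]] [mg [K HK]]; split; first exact: measurable_realfun.measurable_funM.
exists (M * K) => x; rewrite /= normrM; apply: ler_pM => //.
Qed.

Lemma mb_cst c : mb (cst c).
Proof. by split; [exact: measurable_cst| exists `|c|]. Qed.

Lemma mb_indic (A : set T) : measurable A -> mb (\1_A).
Proof.
move=> mA; split; first exact: measurable_realfun.measurable_indic.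
by exists 1 => x; rewrite indicE; case: (x \in A); rewrite ?normr1 ?normr0.
Qed.

Lemma ExD f g : mb f -> mb g -> Ex (f \+ g) = Ex f + Ex g.
Proof.
move=> mf mg; rewrite /Ex.
rewrite (_ : (\int[P]_w ((f \+ g) w)%:E)%E = \int[P]_w ((EFin \o f) \+ (EFin \o g)) w)%E; last first.
  by apply: eq_integral => x _.
rewrite integralD_EFin //; try exact: mb_int.
by rewrite Ex_int // Ex_int.
Qed.

Lemma ExN f : mb f -> Ex (fun x => - f x) = - Ex f.
Proof.
move=> mf; rewrite /Ex.
rewrite (_ : (\int[P]_w (- f w)%:E)%E = \int[P]_w ((-1)%:E * (f w)%:E))%E; last first.
  by apply: eq_integral => x _; rewrite -EFinM mulN1r.
by rewrite integralZl //; [rewrite Ex_int // -EFinM /= mulN1r | exact: mb_int].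
Qed.

Lemma ExB f g : mb f -> mb g -> Ex (f \- g) = Ex f - Ex g.
Proof. by move=> mf mg; rewrite (ExD mf (mbN mg)) ExN. Qed.

Lemma ExZ (c : R) f : mb f -> Ex (fun x => c * f x) = c * Ex f.
Proof.
move=> mf; rewrite /Ex.
rewrite (_ : (\int[P]_w (c * f w)%:E)%E = \int[P]_w (c%:E * (f w)%:E))%E; last first.
  by apply: eq_integral => x _.
by rewrite integralZl //; [rewrite Ex_int // -EFinM | exact: mb_int].
Qed.

Lemma Ex_cst c : Ex (cst c) = c.
Proof.
by rewrite /Ex (_ : (\int[P]_w (cst c w)%:E)%E = \int[P]_w (cst c%:E w))%E // integral_cst //= (probability_setT P) mule1.
Qed.

Lemma Ex_indic (A : set T) : measurable A -> Ex (\1_A) = fine (P A).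
Proof. by move=> mA; rewrite /Ex integral_indic // setIT. Qed.

Lemma Ex_le f g : mb f -> mb g -> (forall x, f x <= g x) -> Ex f <= Ex g.
Proof.
move=> mf mg fg; rewrite -lee_fin -Ex_int // -Ex_int //.
apply: le_integral => //; try exact: mb_int.
by move=> x _; rewrite lee_fin.
Qed.

Lemma Ex_ge0 f : mb f -> (forall x, 0 <= f x) -> 0 <= Ex f.
Proof. by move=> mf f0; rewrite -(Ex_cst 0); apply: Ex_le => //; exact: mb_cst. Qed.

Lemma Ex_ext f g : f =1 g -> Ex f = Ex g.
Proof. by move=> fg; rewrite /Ex; congr fine; apply: eq_integral => x _; rewrite fg. Qed.

Lemma expectation_Ex f : mb f -> ('E_P[f] = (Ex f)%:E)%E.
Proof. by move=> mf; rewrite unlock Ex_int. Qed.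

Lemma variance_Ex f : mb f ->
  variance P f = (Ex (fun x => f x ^+ 2) - Ex f ^+ 2)%:E.
Proof.
move=> mf; rewrite /variance unlock.
rewrite (_ : fine 'E_P[f] = Ex f); last by rewrite expectation_Ex.
have mf2 : mb (fun x => f x ^+ 2) by exact: (mbM mf mf).
set c := Ex f.
have -> : (f \- cst c) * (f \- cst c) = (fun x => f x ^+ 2) \+ (fun x => (- (2 * c)) * f x) \+ cst (c ^+ 2).
  apply/funext => x; rewrite !fctE /= expr2; ring.
rewrite expectation_Ex; last by apply: mbD; [apply: mbD => //; apply: mbM => //; exact: mb_cst|exact: mb_cst].
rewrite ExD; [|apply: mbD => //; apply: mbM => //; exact: mb_cst|exact: mb_cst].
rewrite ExD //; last by apply: mbM => //; exact: mb_cst.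
rewrite ExZ // Ex_cst; congr EFin; rewrite -/c; ring.
Qed.

End ExTools.

Section restr_push.
Local Open Scope ereal_scope.
Context d d' (T1 : measurableType d) (T2 : measurableType d') (R : realType).
Variables (m : {measure set T1 -> \bar R}) (f : T1 -> T2).
Variable (F : set T1).

Definition rpush (mf : measurable_fun [set: T1] f) (mF : measurable F) (A : set T2) :=
  m (f @^-1` A `&` F).
Variables (mf : measurable_fun [set: T1] f) (mF : measurable F).

Let rpush0 : rpush mf mF set0 = 0.
Proof. by rewrite /rpush preimage_set0 set0I measure0. Qed.

Let rpush_ge0 A : 0 <= rpush mf mF A.
Proof. exact: measure_ge0. Qed.

Let rpush_sigma_additive : semi_sigma_additive (rpush mf mF).
Proof.
move=> G mG tG mUG; rewrite /rpush preimage_bigcup setI_bigcupl.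
apply: measure_semi_sigma_additive.
- move=> n; apply: measurableI => //; rewrite -[X in measurable X]setTI; exact: mf.
- apply/trivIsetP => /= i j _ _ ij; rewrite setIACA -preimage_setI.
  by move/trivIsetP : tG => /(_ _ _ _ _ ij) ->//; rewrite preimage_set0 set0I.
- rewrite -setI_bigcupl; apply: measurableI => //.
  by rewrite -preimage_bigcup -[X in measurable X]setTI; exact: mf.
Qed.

HB.instance Definition _ := isMeasure.Build _ _ _
  (rpush mf mF) rpush0 rpush_ge0 rpush_sigma_additive.

End restr_push.

Section Laws.
Context {d : measure_display} {T : measurableType d} {R : realType}.
Variable P : probability T R.
Local Open Scope ereal_scope.

Definition mkRV (f : T -> R) (mf : measurable_fun setT f) : {mfun T >-> R} :=
  HB.pack f (isMeasurableFun.Build _ _ _ _ f mf).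

Definition law (f : T -> R) (mf : measurable_fun setT f) := distribution P (mkRV mf).

Lemma lawE f (mf : measurable_fun setT f) A : law mf A = P (f @^-1` A).
Proof. by []. Qed.

Lemma preimage_pairX (U V : T -> R) (A B : set R) :
  (fun w => (U w, V w)) @^-1` (A `*` B) = U @^-1` A `&` V @^-1` B.
Proof. by apply/seteqP; split => w. Qed.

Lemma key_indep (U V : T -> R) (mU : measurable_fun setT U) (mV : measurable_fun setT V)
  (F : set T) (mF : measurable F) (c : R) : (0 <= c)%R ->
  (forall A B, measurable A -> measurable B ->
     P (U @^-1` A `&` V @^-1` B `&` F) = c%:E * (P (U @^-1` A) * P (V @^-1` B))) ->
  forall E : set (R * R), measurable E ->
    P ((fun w => (U w, V w)) @^-1` E `&` F) = c%:E * ((law mU \x law mV) E).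
Proof.
move=> c0 H E mE.
have mUV : measurable_fun setT (fun w => (U w, V w)) by exact: measurable_fun_pair.
have mpre : measurable ((fun w => (U w, V w)) @^-1` E `&` F).
  by apply: measurableI => //; rewrite -[X in measurable X]setTI; exact: mUV.
have [c00|cgt0] := eqVneq c 0%R.
  rewrite c00 in H *.
  have PF0 : P F = 0.
    have := H setT setT measurableT measurableT.
    by rewrite !preimage_setT !setTI mul0e.
  rewrite mul0e; apply/eqP; rewrite eq_le measure_ge0 andbT -PF0.
  by apply: le_measure => //; rewrite inE.
have cpos : (0 < c)%R by rewrite lt0r cgt0.
have ci : (0 <= c^-1)%R by rewrite invr_ge0 ltW.
pose m' := mscale (NngNum ci) (@rpush _ _ _ _ _ P _ F mUV mF).
have m'E A : m' A = (c^-1)%:E * P ((fun w => (U w, V w)) @^-1` A `&` F) by [].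
have hm' : forall A B, measurable A -> measurable B -> m' (A `*` B) = law mU A * law mV B.
  move=> A B mA mB.
  transitivity ((c^-1)%:E * P ((fun w => (U w, V w)) @^-1` (A `*` B) `&` F)); first by [].
  rewrite preimage_pairX H // !lawE.
  by rewrite muleA -EFinM mulVf ?mul1e // gt_eqF.
have := @product_measure_unique _ _ _ _ R (law mU) (law mV) m' hm' _ mE.
move=> ->.
transitivity (c%:E * ((c^-1)%:E * P ((fun w => (U w, V w)) @^-1` E `&` F))); last by [].
by rewrite muleA -EFinM divff ?mul1e // gt_eqF.
Qed.

Lemma indep_law (U V : T -> R) (mU : measurable_fun setT U) (mV : measurable_fun setT V) :
  (forall A B, measurable A -> measurable B ->
     P (U @^-1` A `&` V @^-1` B) = P (U @^-1` A) * P (V @^-1` B)) ->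
  forall E : set (R * R), measurable E ->
    P ((fun w => (U w, V w)) @^-1` E) = (law mU \x law mV) E.
Proof.
move=> H E mE.
have K := @key_indep U V mU mV setT measurableT 1%R ler01.
rewrite -(setIT ((fun w => (U w, V w)) @^-1` E)) K //; first by rewrite mul1e.
by move=> A B mA mB; rewrite setIT mul1e H.
Qed.

Lemma prod_law_eq (U V U' V' : T -> R) (mU : measurable_fun setT U) (mV : measurable_fun setT V)
  (mU' : measurable_fun setT U') (mV' : measurable_fun setT V') :
  (forall A, measurable A -> P (U @^-1` A) = P (U' @^-1` A)) ->
  (forall A, measurable A -> P (V @^-1` A) = P (V' @^-1` A)) ->
  forall E : set (R * R), measurable E ->
    (law mU \x law mV) E = (law mU' \x law mV') E.
Proof.
move=> HU HV E mE.
apply: (@product_measure_unique _ _ _ _ R (law mU) (law mV) (law mU' \x law mV')) => //.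
move=> A B mA mB; apply: eq_trans; first exact: product_measure1E.
by congr (_ * _); [exact/esym/HU | exact/esym/HV].
Qed.

End Laws.

Section Transfer.
Context {d : measure_display} {T : measurableType d} {R : realType}.
Variable P : probability T R.

Definition mbR (g : R -> R) :=
  measurable_fun setT g /\ exists M : R, forall x, `|g x| <= M.

Lemma mb_comp (g : R -> R) (X : T -> R) : mbR g -> measurable_fun setT X -> mb (g \o X).
Proof.
by move=> [mg [M HM]] mX; split; [exact: measurableT_comp | exists M => x; exact: HM].
Qed.

Lemma mbR_int (mu : probability R R) g : mbR g -> mu.-integrable setT (EFin \o g).
Proof.
case=> mg [M HM]; apply: measurable_bounded_integrable => //.
  by apply: (le_lt_trans (probability_le1 mu measurableT)); rewrite ltry.
exists M; split; first exact: num_real.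
move=> x Mx y _ /=; apply: le_trans (HM y) _; exact: ltW.
Qed.

Definition mkRVg {d'} {T' : measurableType d'} (f : T -> T') (mf : measurable_fun setT f) :
  {mfun T >-> T'} := HB.pack f (isMeasurableFun.Build _ _ _ _ f mf).

Lemma Ex_lawE (X : T -> R) (mX : measurable_fun setT X) g : mbR g ->
  (\int[P]_w ((g \o X) w)%:E = \int[law P mX]_y (g y)%:E)%E.
Proof.
move=> mg; symmetry; apply: (@integral_distribution _ _ _ _ _ P (mkRV mX) (EFin \o g)).
  by case: mg => mg _; exact/measurable_realfun.measurable_EFinP.
exact: (mb_int P (mb_comp mg mX)).
Qed.

Lemma Ex_law (X Y : T -> R) (mX : measurable_fun setT X) (mY : measurable_fun setT Y) :
  (forall A, measurable A -> P (X @^-1` A) = P (Y @^-1` A)) ->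
  forall g, mbR g -> Ex P (g \o X) = Ex P (g \o Y).
Proof.
move=> HXY g mg; rewrite /Ex Ex_lawE // Ex_lawE //.
by congr fine; apply: eq_measure_integral => A mA _; first [exact: (HXY A mA) | exact: (esym (HXY A mA))].
Qed.

Lemma Ex_pair (U V : T -> R) (mU : measurable_fun setT U) (mV : measurable_fun setT V) :
  (forall A B, measurable A -> measurable B ->
     P (U @^-1` A `&` V @^-1` B) = (P (U @^-1` A) * P (V @^-1` B))%E) ->
  forall (phi : R * R -> R), measurable_fun setT phi -> (exists M, forall z, `|phi z| <= M) ->
  (\int[P]_w (phi (U w, V w))%:E = \int[law P mU \x law P mV]_z (phi z)%:E)%E.
Proof.
move=> H phi mphi [M HM].
have mUV : measurable_fun setT (fun w => (U w, V w)) by exact: measurable_fun_pair.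
have mpw : mb (fun w => phi (U w, V w)).
  by split; [exact: (measurableT_comp mphi mUV)| exists M].
transitivity (\int[distribution P (mkRVg mUV)]_z (phi z)%:E)%E.
  symmetry; apply: (@integral_distribution _ _ _ _ _ P (mkRVg mUV) (EFin \o phi)).
    exact/measurable_realfun.measurable_EFinP.
  exact: (mb_int P mpw).
apply: eq_measure_integral => A mA _.
exact: (indep_law mU mV H mA).
Qed.

Lemma fub_nonneg (mu nu : probability R R) (f g : R -> R) :
  mbR f -> mbR g -> (forall x, 0 <= f x) -> (forall x, 0 <= g x) ->
  (\int[mu \x nu]_z (f z.1 * g z.2)%:E =
   (\int[mu]_x (f x)%:E) * (\int[nu]_y (g y)%:E))%E.
Proof.
move=> [mf _] [mg _] f0 g0.
have mF : measurable_fun setT (fun z : R * R => (f z.1 * g z.2)%:E).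
  apply/measurable_realfun.measurable_EFinP; apply: measurable_realfun.measurable_funM.
    exact: (measurableT_comp mf measurable_fst).
  exact: (measurableT_comp mg measurable_snd).
rewrite (@fubini_tonelli1 _ _ _ _ R mu nu (fun z : R * R => (f z.1 * g z.2)%:E) mF); last first.
  by move=> z; rewrite lee_fin mulr_ge0.
rewrite /fubini_F /=.
under eq_integral => x _.
  rewrite (_ : (\int[nu]_y (f x * g y)%:E = (f x)%:E * \int[nu]_y (g y)%:E)%E); last first.
    rewrite -ge0_integralZl //; try by (move=> *; rewrite lee_fin ?f0 ?g0).
    exact/measurable_realfun.measurable_EFinP.
  over.
rewrite ge0_integralZr //.
- exact/measurable_realfun.measurable_EFinP.
- by move=> x _; rewrite lee_fin f0.
- by apply: integral_ge0 => y _; rewrite lee_fin g0.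
Qed.

Definition indep2 (U V : T -> R) := forall A B, measurable A -> measurable B ->
     P (U @^-1` A `&` V @^-1` B) = (P (U @^-1` A) * P (V @^-1` B))%E.

Lemma Ex_indep_nonneg (U V : T -> R) (mU : measurable_fun setT U) (mV : measurable_fun setT V) :
  indep2 U V -> forall f g, mbR f -> mbR g -> (forall x, 0 <= f x) -> (forall x, 0 <= g x) ->
  Ex P (fun w => f (U w) * g (V w)) = Ex P (f \o U) * Ex P (g \o V).
Proof.
move=> H f g mf mg f0 g0.
have [[mf' [Mf HMf]] [mg' [Mg HMg]]] := (mf, mg).
rewrite /Ex (Ex_pair mU mV H (phi := fun z => f z.1 * g z.2)); last first.
- exists (Mf * Mg) => z; rewrite normrM; apply: ler_pM => //.
- apply: measurable_realfun.measurable_funM.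
    exact: (measurableT_comp mf' measurable_fst).
  exact: (measurableT_comp mg' measurable_snd).
rewrite fub_nonneg // Ex_lawE // Ex_lawE //.
rewrite fineM //; apply: integrable_fin_num => //; exact: mbR_int.
Qed.

Lemma mbR_max0 f : mbR f -> mbR (fun x => Num.max (f x) 0).
Proof.
move=> [mf [M HM]]; split.
  by apply: measurable_maxr => //; exact: measurable_cst.
exists M => x; apply: le_trans (HM x).
by rewrite /Num.max; case: ifP => _; rewrite ?normr0 ?normr_ge0.
Qed.

Lemma mbR_opp f : mbR f -> mbR (fun x => - f x).
Proof.
move=> [mf [M HM]]; split; first exact: measurableT_comp.
by exists M => x; rewrite normrN.
Qed.

Lemma max0_split (a : R) : a = Num.max a 0 - Num.max (- a) 0.
Proof. by rewrite /Num.max; case: (ltP a 0); case: (ltP (- a) 0) => *; lra. Qed.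

Lemma Ex_indep (U V : T -> R) (mU : measurable_fun setT U) (mV : measurable_fun setT V) :
  indep2 U V -> forall f g, mbR f -> mbR g ->
  Ex P (fun w => f (U w) * g (V w)) = Ex P (f \o U) * Ex P (g \o V).
Proof.
move=> H f g mf mg.
pose fp := fun x => Num.max (f x) 0; pose fn := fun x => Num.max (- f x) 0.
pose gp := fun x => Num.max (g x) 0; pose gn := fun x => Num.max (- g x) 0.
have mfp : mbR fp by exact: mbR_max0.
have mfn : mbR fn by apply: mbR_max0; exact: mbR_opp.
have mgp : mbR gp by exact: mbR_max0.
have mgn : mbR gn by apply: mbR_max0; exact: mbR_opp.
have p0 : forall (h : R -> R) x, 0 <= Num.max (h x) 0 by move=> h x; rewrite le_max lexx orbT.
have fp0 x : 0 <= fp x := p0 f x.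
have fn0 x : 0 <= fn x := p0 (fun y => - f y) x.
have gp0 x : 0 <= gp x := p0 g x.
have gn0 x : 0 <= gn x := p0 (fun y => - g y) x.
have ef x : f x = fp x - fn x by exact: max0_split.
have eg x : g x = gp x - gn x by exact: max0_split.
have hU := mb_comp _ mU; have hV := mb_comp _ mV.
have -> : Ex P (f \o U) = Ex P (fp \o U) - Ex P (fn \o U).
  by rewrite -ExB; [apply: Ex_ext => w; rewrite /= ef | exact: hU | exact: hU].
have -> : Ex P (g \o V) = Ex P (gp \o V) - Ex P (gn \o V).
  by rewrite -ExB; [apply: Ex_ext => w; rewrite /= eg | exact: hV | exact: hV].
have -> : Ex P (fun w => f (U w) * g (V w)) =
   (Ex P (fun w => fp (U w) * gp (V w)) - Ex P (fun w => fp (U w) * gn (V w))) -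
   (Ex P (fun w => fn (U w) * gp (V w)) - Ex P (fun w => fn (U w) * gn (V w))).
  rewrite -!ExB; first (by apply: Ex_ext => w; rewrite /= ef eg; ring);
    by (apply: mbB || apply: mbM); (apply: mbM || apply: mbB || idtac);
       first [exact: hU | exact: hV | apply: mbM; [exact: hU|exact: hV]].
rewrite !(Ex_indep_nonneg mU mV H) //; ring.
Qed.

End Transfer.

Section Sums.
Context {d : measure_display} {T : measurableType d} {R : realType}.
Variable P : probability T R.

Definition Sm (X : nat -> T -> R) (n : nat) : T -> R := fun w => \sum_(i < n) X i w.

Lemma Sm0 X : Sm X 0 = cst 0.
Proof. by apply/funext => w; rewrite /Sm big_ord0. Qed.

Lemma SmS X n : Sm X n.+1 = fun w => Sm X n w + X n w.
Proof. by apply/funext => w; rewrite /Sm big_ord_recr. Qed.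

Lemma mSm X : (forall i, measurable_fun setT (X i)) -> forall n, measurable_fun setT (Sm X n).
Proof.
move=> mX; elim=> [|n IH]; first by rewrite Sm0; exact: measurable_cst.
by rewrite SmS; exact: measurable_funD.
Qed.

Lemma measurable_addpre (A : set R) : measurable A ->
  measurable [set z : R * R | A (z.1 + z.2)].
Proof.
move=> mA.
have mf : measurable_fun setT (fun z : R * R => z.1 + z.2).
  by apply: measurable_funD; [exact: measurable_fst | exact: measurable_snd].
by have := mf measurableT A mA; rewrite setTI.
Qed.

Lemma preimage_Sm X n (A : set R) :
  Sm X n.+1 @^-1` A = (fun w => (Sm X n w, X n w)) @^-1` [set z : R * R | A (z.1 + z.2)].
Proof. by rewrite SmS. Qed.

Variable X : nat -> T -> R.
Hypothesis mX : forall i, measurable_fun setT (X i).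
Hypothesis iX : mutually_independent P X.

Lemma mpre (f : T -> R) (mf : measurable_fun setT f) (A : set R) : measurable A ->
  measurable (f @^-1` A).
Proof. by move=> mA; rewrite -[X in measurable X]setTI; exact: mf. Qed.

Lemma bigcap_meas (s : seq nat) (B : nat -> set R) : (forall i, measurable (B i)) ->
  measurable (\big[setI/setT]_(i <- s) (X i @^-1` B i)).
Proof.
move=> mB; elim: s => [|i s IH]; first by rewrite big_nil.
by rewrite big_cons; apply: measurableI => //; exact: mpre.
Qed.

Lemma sumind n : forall (A : set R) (s : seq nat) (B : nat -> set R),
  measurable A -> uniq s -> all (fun i => n <= i)%N s -> (forall i, measurable (B i)) ->
  P (Sm X n @^-1` A `&` \big[setI/setT]_(i <- s) (X i @^-1` B i)) =
  (P (Sm X n @^-1` A) * \prod_(i <- s) P (X i @^-1` B i))%E.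
Proof.
elim: n => [|n IH] A s B mA us alls mB.
  rewrite Sm0 -(iX us mB).
  have [A0|nA0] := pselect (A 0).
    rewrite (_ : cst 0 @^-1` A = setT); last by apply/seteqP; split.
    by rewrite setTI probability_setT mul1e.
  rewrite (_ : cst 0 @^-1` A = set0); last by apply/seteqP; split.
  by rewrite set0I measure0 mul0e.
set F := \big[setI/setT]_(i <- s) (X i @^-1` B i).
have mF : measurable F by exact: bigcap_meas.
have PF : P F = (\prod_(i <- s) P (X i @^-1` B i))%E by exact: iX.
have nns : n \notin s.
  apply/negP => ns; move/allP : alls => /(_ _ ns); by rewrite ltnn.
have alls' : all (fun i => n <= i)%N s.
  by apply/allP => i /(allP alls) /ltnW.
have IHn : forall A' B', measurable A' -> measurable B' ->
   P (Sm X n @^-1` A' `&` X n @^-1` B' `&` F) =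
   ((fine (P F))%:E * (P (Sm X n @^-1` A') * P (X n @^-1` B')))%E.
  move=> A' B' mA' mB'.
  pose B'' := fun i => if i == n then B' else B i.
  have mB'' : forall i, measurable (B'' i) by move=> i; rewrite /B''; case: ifP.
  have := IH A' (n :: s) B'' mA'; rewrite /= nns us leqnn alls' /=.
  move=> /(_ isT isT mB''); rewrite big_cons big_cons /B'' eqxx.
  have -> : \big[setI/setT]_(j <- s) (X j @^-1` (if j == n then B' else B j)) = F.
    rewrite /F big_seq_cond [RHS]big_seq_cond; apply: eq_bigr => j /andP[js _].
    by rewrite ifN //; apply: contraNneq nns => <-.
  have -> : (\prod_(j <- s) P (X j @^-1` (if j == n then B' else B j)))%E = P F.
    rewrite PF big_seq_cond [RHS]big_seq_cond; apply: eq_bigr => j /andP[js _].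
    by rewrite ifN //; apply: contraNneq nns => <-.
  rewrite -setIA => ->.
  rewrite fineK; last by rewrite fin_num_measure.
  by rewrite muleA muleC muleA [X in (X * _)%E]muleC.
have IH1 : forall A' B', measurable A' -> measurable B' ->
   P (Sm X n @^-1` A' `&` X n @^-1` B') = (P (Sm X n @^-1` A') * P (X n @^-1` B'))%E.
  move=> A' B' mA' mB'.
  pose B'' := fun i => if i == n then B' else B i.
  have mB'' : forall i, measurable (B'' i) by move=> i; rewrite /B''; case: ifP.
  have := IH A' [:: n] B'' mA' isT; rewrite /= leqnn /= => /(_ isT mB'').
  by rewrite big_cons big_nil big_cons big_nil /B'' eqxx setIT mule1.
have mSn := mSm mX n.
have K := key_indep mSn (mX n) mF (fine_ge0 (measure_ge0 P F)) IHn (measurable_addpre mA).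
have L := indep_law mSn (mX n) IH1 (measurable_addpre mA).
rewrite preimage_Sm K -L -PF fineK ?fin_num_measure //.
by rewrite muleC.
Qed.

End Sums.

Section Sums2.
Context {d : measure_display} {T : measurableType d} {R : realType}.
Variable P : probability T R.

Lemma indep_Sm (X : nat -> T -> R) (mX : forall i, measurable_fun setT (X i))
  (iX : mutually_independent P X) n : indep2 P (Sm X n) (X n).
Proof.
move=> A' B' mA' mB'.
pose B'' := fun i => if i == n then B' else setT.
have mB'' : forall i, measurable (B'' i) by move=> i; rewrite /B''; case: ifP.
have := @sumind _ _ _ P X mX iX n A' [:: n] B'' mA' isT; rewrite /= leqnn /= => /(_ isT mB'').
by rewrite big_cons big_nil big_cons big_nil /B'' eqxx setIT mule1.
Qed.

Lemma law_sums (X X' : nat -> T -> R) (mX : forall i, measurable_fun setT (X i))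
  (mX' : forall i, measurable_fun setT (X' i))
  (iX : mutually_independent P X) (iX' : mutually_independent P X') :
  (forall i A, measurable A -> P (X i @^-1` A) = P (X' i @^-1` A)) ->
  forall n A, measurable A -> P (Sm X n @^-1` A) = P (Sm X' n @^-1` A).
Proof.
move=> HXX; elim=> [|n IH] A mA; first by rewrite !Sm0.
rewrite !preimage_Sm.
rewrite (indep_law (mSm mX n) (mX n) (indep_Sm mX iX n) (measurable_addpre mA)).
rewrite (indep_law (mSm mX' n) (mX' n) (indep_Sm mX' iX' n) (measurable_addpre mA)).
apply: prod_law_eq => //; [exact: HXX | exact: measurable_addpre].
Qed.

Lemma mi_restrict (Y : bool * nat -> T -> R) (b : bool) :
  mutually_independent P Y -> mutually_independent P (fun i => Y (b, i)).
Proof.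
move=> HY s B us mB.
have inj : injective (fun i : nat => (b, i)) by move=> x y [].
have := HY (map (fun i : nat => (b, i)) s) (fun ib => B ib.2); rewrite map_inj_uniq // => /(_ us (fun ib => mB _)).
by rewrite !big_map.
Qed.

Lemma mi_pair (Y : bool * nat -> T -> R) :
  mutually_independent P Y -> indep2 P (Y (true, 0%N)) (Y (false, 0%N)).
Proof.
move=> HY A B mA mB.
have := HY [:: (true, 0%N); (false, 0%N)] (fun ib => if ib.1 then A else B) isT.
move=> /(_ (fun ib => if ib.1 as b return measurable (if b then A else B) then mA else mB)).
by rewrite !big_cons !big_nil /= setIT mule1.
Qed.

Lemma tail0 (X : T -> R) : measurable_fun setT X ->
  forall eps : R, 0 < eps -> exists N0 : nat, forall N : nat, (N0 <= N)%N ->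
    fine (P [set w | N%:R < `|X w|]) <= eps.
Proof.
move=> mX eps eps0.
pose F := fun n : nat => [set w | n%:R < `|X w|].
have mF n : measurable (F n).
  rewrite /F (_ : [set w | n%:R < `|X w|] = ((fun x : R => `|x|) \o X) @^-1` `]n%:R, +oo[); last first.
    by apply/seteqP; split => w /=; rewrite in_itv /= andbT.
  apply: mpre => //; exact: (measurableT_comp (@normr_measurable R setT) mX).
have F0 : \bigcap_n F n = set0.
  apply/seteqP; split => // w Fw.
  have hk := archi_boundP (normr_ge0 (X w)).
  by have := Fw _ I; rewrite /F /= => h; have := lt_trans hk (h _); rewrite ltxx.
have := @nonincreasing_cvg_mu _ _ _ P F.
rewrite F0 measure0 => /(_ _ mF _ _).
have F0lt : (P (F 0%N) < +oo)%E.
  by apply: (le_lt_trans (probability_le1 P (mF 0%N))); rewrite ltry.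
have ndF : {homo F : n m / (n <= m)%N >-> (m <= n)%O}.
  move=> n m nm; apply/subsetPset => w; rewrite /F /=; apply: le_lt_trans; by rewrite ler_nat.
move=> /(_ F0lt measurable0 ndF) /fine_cvgP[_].
move=> /cvgrPdist_le /(_ _ eps0) [N0 _ HN0].
exists N0 => N N0N; have := HN0 _ N0N; rewrite /= sub0r normrN.
apply: le_trans; exact: ler_norm.
Qed.

End Sums2.

Section Trunc.
Context {R : realType}.

Definition ind (c : R) (x : R) : R := if `|x| <= c then 1 else 0.
Definition yt (c : R) (x : R) : R := if `|x| <= c then x else 0.

Lemma mle (c : R) : measurable_fun setT (fun x : R => `|x| <= c).
Proof. apply: measurable_fun_ler; [exact: normr_measurable | exact: measurable_cst]. Qed.

Lemma mbR_ind (c : R) : mbR (ind c).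
Proof.
split; first by apply: measurable_fun_ifT; [exact: mle | exact: measurable_cst | exact: measurable_cst].
by exists 1 => x; rewrite /ind; case: ifP; rewrite ?normr1 ?normr0.
Qed.

Lemma mbR_yt (c : R) : mbR (yt c).
Proof.
split; first by apply: measurable_fun_ifT; [exact: mle | exact: measurable_id | exact: measurable_cst].
exists `|c| => x; rewrite /yt; case: ifP => h; rewrite ?normr0 //.
exact: le_trans h (ler_norm c).
Qed.

Lemma mbR_sq (f : R -> R) : mbR f -> mbR (fun x => f x ^+ 2).
Proof.
move=> [mf [M HM]]; split; first exact: measurable_funX.
exists (M * M) => x; rewrite normrX expr2; apply: ler_pM => //.
Qed.

Lemma mbR_lin (a b : R) (f g : R -> R) : mbR f -> mbR g -> mbR (fun x => a * f x + b * g x).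
Proof.
move=> [mf [M HM]] [mg [K HK]]; split.
  by apply: measurable_funD; apply: measurable_funM => //; exact: measurable_cst.
exists (`|a| * M + `|b| * K) => x; apply: le_trans (ler_normD _ _) _.
by rewrite !normrM; apply: lerD; apply: ler_wpM2l.
Qed.

Lemma mbR_add (f g : R -> R) : mbR f -> mbR g -> mbR (fun x => f x + g x).
Proof.
move=> hf hg; have := mbR_lin 1 1 hf hg.
by rewrite (_ : (fun x => 1 * f x + 1 * g x) = fun x => f x + g x) //; apply/funext => x; rewrite !mul1r.
Qed.

Lemma mbR_cst (c : R) : mbR (fun _ : R => c).
Proof. by split; [exact: measurable_cst | exists `|c|]. Qed.

Definition qf (L t : R) (x : R) : R := t ^+ 2 * ind L x - 2 * t * yt L x + yt L x ^+ 2.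
Definition vf (N t : R) (x : R) : R := yt N x ^+ 2 - 2 * t * yt N x + t ^+ 2.

Lemma qfE L t x : qf L t x = (x - t) ^+ 2 * ind L x.
Proof. by rewrite /qf /ind /yt; case: ifP => _; ring. Qed.

Lemma vfE N t x : vf N t x = (yt N x - t) ^+ 2.
Proof. by rewrite /vf; ring. Qed.

Lemma mbR_qf L t : mbR (qf L t).
Proof.
rewrite /qf; have := mbR_lin (t ^+ 2) (- (2 * t)) (mbR_ind L) (mbR_yt L).
move=> h; have := mbR_add h (mbR_sq (mbR_yt L)).
by rewrite (_ : (fun x => _) = qf L t) //; apply/funext => x; rewrite /qf; ring.
Qed.

Lemma mbR_vf N t : mbR (vf N t).
Proof.
have := mbR_add (mbR_lin 1 (- (2 * t)) (mbR_sq (mbR_yt N)) (mbR_yt N)) (mbR_cst (t ^+ 2)).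
by rewrite (_ : (fun x => _) = vf N t) //; apply/funext => x; rewrite /vf; ring.
Qed.

Lemma qf_ge0 L t x : 0 <= qf L t x.
Proof. by rewrite qfE; apply: mulr_ge0; [exact: sqr_ge0 | rewrite /ind; case: ifP]. Qed.

Lemma qf_le_vf (L N t : R) x : L <= N -> qf L t x <= vf N t x.
Proof.
move=> LN; rewrite qfE vfE /ind /yt; case: ifP => h.
  by rewrite (le_trans h LN) mulr1.
by rewrite mulr0 sqr_ge0.
Qed.

Lemma qf_mono (M L t : R) x : M <= L -> qf M t x <= qf L t x.
Proof.
move=> ML; rewrite !qfE /ind; case: ifP => h.
  by rewrite (le_trans h ML).
by rewrite mulr0; case: ifP; rewrite ?mulr1 ?mulr0 ?sqr_ge0.
Qed.

Lemma qf_lowM (M t : R) x : M <= `|t| -> (`|t| - M) ^+ 2 * ind M x <= qf M t x.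
Proof.
move=> Mt; rewrite qfE /ind; case: ifP => h; last by rewrite !mulr0.
rewrite !mulr1.
have h1 : `|t| <= `|x - t| + `|x|.
  by rewrite distrC; apply: le_trans (ler_normD _ _); rewrite subrK.
rewrite -(real_normK (num_real (x - t))).
have h2 : 0 <= `|t| - M by rewrite subr_ge0.
have h3 : `|t| - M <= `|x - t| by lra.
by rewrite lerXn2r // ?nnegrE ?normr_ge0.
Qed.

Lemma ind_tail (N L t : R) x : N <= L -> `|t| + 1 <= N ->
  ind L x - ind N x <= qf L t x.
Proof.
move=> NL tN; rewrite qfE /ind.
have [hN|hN] := boolP (`|x| <= N); first by rewrite (le_trans hN NL) subrr mulr1 sqr_ge0.
have [hL|hL] := boolP (`|x| <= L); last by rewrite subrr mulr0.
rewrite subr0 mulr1.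
have h1 : `|x| <= `|x - t| + `|t|.
  by apply: le_trans (ler_normD _ _); rewrite subrK.
have h2 : N < `|x| by rewrite ltNge.
rewrite -(real_normK (num_real (x - t))).
have h3 : 1 <= `|x - t| by lra.
by rewrite -(expr1n _ 2) lerXn2r // ?nnegrE ?normr_ge0.
Qed.

End Trunc.

Section AS.
Context {d : measure_display} {T : measurableType d} {R : realType}.
Variable P : probability T R.
Variable X : T -> R.
Hypothesis mX : measurable_fun setT X.

Lemma meas_gt (c : R) : measurable [set w | c < `|X w|].
Proof.
rewrite (_ : [set w | c < `|X w|] = ((fun x : R => `|x|) \o X) @^-1` `]c, +oo[); last first.
  by apply/seteqP; split => w /=; rewrite in_itv /= andbT.
apply: mpre => //; exact: (measurableT_comp (@normr_measurable R setT) mX).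
Qed.

Definition AA (L : nat) := Ex P (ind L%:R \o X).
Definition BB (L : nat) := Ex P (yt L%:R \o X).
Definition CC (L : nat) := Ex P ((fun x => yt L%:R x ^+ 2) \o X).
Definition QQ (L : nat) (t : R) := t ^+ 2 * AA L - 2 * t * BB L + CC L.

Let hc (f : R -> R) : mbR f -> mb (f \o X) := fun h => mb_comp h mX.

Lemma ExQ L t : Ex P (qf L%:R t \o X) = QQ L t.
Proof.
have -> : qf L%:R t \o X = (fun w => t ^+ 2 * (ind L%:R \o X) w) \+
   (fun w => (- (2 * t)) * (yt L%:R \o X) w) \+ ((fun x => yt L%:R x ^+ 2) \o X).
  by apply/funext => w; rewrite /qf /=; ring.
rewrite ExD; [|apply: mbD; apply: mbM; (exact: mb_cst || exact: hc (mbR_ind _) || exact: hc (mbR_yt _)) |exact: hc (mbR_sq (mbR_yt _))].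
rewrite ExD; [|apply: mbM; (exact: mb_cst || exact: hc (mbR_ind _)) |apply: mbM; (exact: mb_cst || exact: hc (mbR_yt _))].
rewrite !ExZ; [|exact: hc (mbR_yt _)|exact: hc (mbR_ind _)].
by rewrite /QQ /AA /BB /CC; ring.
Qed.

Lemma ExV N t : Ex P (vf N%:R t \o X) = CC N - 2 * t * BB N + t ^+ 2.
Proof.
have -> : vf N%:R t \o X = ((fun x => yt N%:R x ^+ 2) \o X) \+
   (fun w => (- (2 * t)) * (yt N%:R \o X) w) \+ cst (t ^+ 2).
  by apply/funext => w; rewrite /vf /=; ring.
rewrite ExD; [|apply: mbD; [exact: hc (mbR_sq (mbR_yt _))| apply: mbM; (exact: mb_cst || exact: hc (mbR_yt _))] |exact: mb_cst].
rewrite ExD; [|exact: hc (mbR_sq (mbR_yt _)) |apply: mbM; (exact: mb_cst || exact: hc (mbR_yt _))].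
rewrite ExZ; last exact: hc (mbR_yt _).
by rewrite Ex_cst /BB /CC; ring.
Qed.

Lemma QQ_ge0 L t : 0 <= QQ L t.
Proof. by rewrite -ExQ; apply: Ex_ge0 => [|x]; [exact: hc (mbR_qf _ _)| exact: qf_ge0]. Qed.

Lemma V_ge0 N t : 0 <= CC N - 2 * t * BB N + t ^+ 2.
Proof.
rewrite -ExV; apply: Ex_ge0 => [|x]; first exact: hc (mbR_vf _ _).
by rewrite /= vfE sqr_ge0.
Qed.

Lemma QQ_le_V L N t : (L <= N)%N -> QQ L t <= CC N - 2 * t * BB N + t ^+ 2.
Proof.
move=> LN; rewrite -ExQ -ExV; apply: Ex_le => [||x]; try exact: hc (mbR_qf _ _); try exact: hc (mbR_vf _ _).
by apply: qf_le_vf; rewrite ler_nat.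
Qed.

Lemma QQ_mono M L t : (M <= L)%N -> QQ M t <= QQ L t.
Proof.
move=> ML; rewrite -!ExQ; apply: Ex_le => [||x]; try exact: hc (mbR_qf _ _).
by apply: qf_mono; rewrite ler_nat.
Qed.

Lemma QQ_lowM M t : M%:R <= `|t| -> (`|t| - M%:R) ^+ 2 * AA M <= QQ M t.
Proof.
move=> Mt; rewrite -ExQ /AA -ExZ; last exact: hc (mbR_ind _).
apply: Ex_le => [||x]; last exact: qf_lowM.
- by apply: mbM; [exact: mb_cst | exact: hc (mbR_ind _)].
- exact: hc (mbR_qf _ _).
Qed.

Lemma AA_tail N L t : (N <= L)%N -> `|t| + 1 <= N%:R -> AA L - AA N <= QQ L t.
Proof.
move=> NL tN; rewrite -ExQ /AA -ExB; [|exact: hc (mbR_ind _)|exact: hc (mbR_ind _)].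
apply: Ex_le => [||x]; [apply: mbB; exact: hc (mbR_ind _) | exact: hc (mbR_qf _ _) |].
by apply: ind_tail => //; rewrite ler_nat.
Qed.

Lemma AA_mono M L : (M <= L)%N -> AA M <= AA L.
Proof.
move=> ML; apply: Ex_le => [||x]; try exact: hc (mbR_ind _).
rewrite /ind /=; case: ifP => h; last by case: ifP.
by rewrite (le_trans h) // ler_nat.
Qed.

Lemma AA_tail1 L : AA L = 1 - fine (P [set w | L%:R < `|X w|]).
Proof.
have mG := meas_gt L%:R.
transitivity (Ex P (cst 1 \- \1_[set w | L%:R < `|X w|])); last first.
  by rewrite ExB ?Ex_cst ?Ex_indic //; [exact: mb_cst | exact: mb_indic].
apply: Ex_ext => w; rewrite /= /ind indicE; case: ifP => h.
  by rewrite memNset ?subr0 //= => hlt; move: h; rewrite leNgt hlt.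
by rewrite mem_set ?subrr //= ltNge h.
Qed.

Lemma CC_ge0 N : 0 <= CC N.
Proof. by apply: Ex_ge0 => [|x]; [exact: hc (mbR_sq (mbR_yt _))| exact: sqr_ge0]. Qed.

Lemma AA_ge0 L : 0 <= AA L.
Proof. by apply: Ex_ge0 => [|x]; [exact: hc (mbR_ind _)| rewrite /= /ind; case: ifP]. Qed.

Lemma AA_le1 L : AA L <= 1.
Proof.
rewrite -(Ex_cst P 1); apply: Ex_le => [||x]; [exact: hc (mbR_ind _)|exact: mb_cst|].
by rewrite /= /ind; case: ifP.
Qed.

Lemma Atail eps : 0 < eps -> exists N1 : nat, forall N, (N1 <= N)%N -> 1 - eps <= AA N.
Proof.
move=> e0; have [N1 HN1] := @tail0 _ _ _ P X mX eps e0.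
by exists N1 => N hN; rewrite AA_tail1; have := HN1 N hN; lra.
Qed.

Lemma AS : exists N0 : nat, forall N, (N0 <= N)%N -> BB N ^+ 2 <= (2 * AA N - 1) * CC N.
Proof.
have h2 : (0:R) < 2^-1 by rewrite invr_gt0 ltr0n.
have [M HM] := Atail h2.
have AM : 2^-1 <= AA M by have := HM M (leqnn M); lra.
have AMpos : 0 < AA M by lra.
case: (pselect (exists L : nat, BB L ^+ 2 < AA L * CC L)) => [[L HL]|H2].
- have AL0 : 0 < AA L.
    rewrite lt0r AA_ge0 andbT; apply/eqP => A0; move: HL.
    by rewrite A0 mul0r ltNge sqr_ge0.
  set g := CC L - BB L ^+ 2 / AA L.
  have g0 : 0 < g.
    have -> : g = (AA L * CC L - BB L ^+ 2) / AA L.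
      by rewrite /g; field; rewrite gt_eqF.
    by apply: divr_gt0 => //; rewrite subr_gt0.
  have Qg : forall t, g <= QQ L t.
    move=> t; have -> : QQ L t = g + (AA L * t - BB L) ^+ 2 / AA L.
      by rewrite /QQ /g; field; rewrite gt_eqF.
    by rewrite lerDl divr_ge0 ?sqr_ge0 // ltW.
  set e := Num.min (20^-1) (g / (8 * M%:R ^+ 2 + 1)).
  have Mpos : 0 < 8 * M%:R ^+ 2 + 1 :> R.
    by apply: ltr_wpDl; [apply: mulr_ge0 => //; exact: sqr_ge0|].
  have e0 : 0 < e by rewrite lt_min invr_gt0 ltr0n divr_gt0.
  have [N1 HN1] := Atail e0.
  exists (maxn L (maxn M N1)) => N hN.
  have LN : (L <= N)%N by apply: leq_trans hN; exact: leq_maxl.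
  have MN : (M <= N)%N by apply: leq_trans hN; rewrite leq_max leq_maxl orbT.
  have N1N : (N1 <= N)%N by apply: leq_trans hN; rewrite leq_max leq_maxr orbT.
  set A := AA N; set B := BB N; set C := CC N.
  set Var := C - B ^+ 2.
  have Vg : g <= Var.
    apply: le_trans (Qg B) _; apply: le_trans (QQ_le_V B LN) _.
    by rewrite /Var -/B -/C; lra.
  have Bb : B ^+ 2 <= 4 * Var + 2 * M%:R ^+ 2.
    have M0 : 0 <= M%:R :> R by [].
    case: (leP M%:R `|B|) => hB.
    + have h1 := QQ_lowM hB.
      have h3 := QQ_le_V B MN.
      have h4 : (`|B| - M%:R) ^+ 2 * 2^-1 <= (`|B| - M%:R) ^+ 2 * AA M.
        by apply: ler_wpM2l => //; exact: sqr_ge0.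
      rewrite -(real_normK (num_real B)).
      have : (`|B| - M%:R) ^+ 2 <= 2 * Var.
        by move: h1 h3 h4; rewrite /Var -/B -/C; lra.
      by move=> h5; have h6 := sqr_ge0 (`|B| - 2 * M%:R); nra.
    + rewrite -(real_normK (num_real B)).
      have hb : 0 <= `|B| by [].
      nra.
  have pe : 1 - e <= A := HN1 N N1N.
  have A1 : A <= 1 := AA_le1 N.
  have e1 : e <= 20^-1 by rewrite ge_min lexx.
  have e2 : e <= g / (8 * M%:R ^+ 2 + 1) by rewrite ge_min lexx orbT.
  set p := 1 - A.
  have p0 : 0 <= p by rewrite /p; lra.
  have pe1 : p <= 20^-1 by rewrite /p; lra.
  have pg : p * (8 * M%:R ^+ 2 + 1) <= g.
    by rewrite -ler_pdivlMr //; apply: le_trans e2; rewrite /p; lra.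
  have hA : A = 1 - p by rewrite /p; ring.
  have hC : C = Var + B ^+ 2 by rewrite /Var; ring.
  rewrite hA hC.
  have k1 : 2 * p * B ^+ 2 <= 2 * p * (4 * Var + 2 * M%:R ^+ 2).
    by apply: ler_wpM2l => //; apply: mulr_ge0.
  have Var0 : 0 <= Var by lra.
  have k2 : p * Var <= 20^-1 * Var by apply: ler_wpM2r.
  nra.
- have HL2 : forall L, AA L * CC L <= BB L ^+ 2.
    by move=> L; rewrite leNgt; apply/negP => hl; apply: H2; exists L.
  set c := BB M / AA M.
  have QM : forall t, QQ M t = AA M * (t - c) ^+ 2 + (CC M - BB M ^+ 2 / AA M).
    by move=> t; rewrite /QQ /c; field; rewrite gt_eqF.
  have z0 : CC M - BB M ^+ 2 / AA M = 0.
    apply/eqP; rewrite eq_le; apply/andP; split.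
      have -> : CC M - BB M ^+ 2 / AA M = (AA M * CC M - BB M ^+ 2) / AA M.
        by field; rewrite gt_eqF.
      by rewrite pmulr_lle0 ?invr_gt0 // subr_le0.
    by have := QQ_ge0 M c; rewrite QM subrr expr0n /= mulr0 add0r.
  have cL : forall L, (M <= L)%N -> QQ L c <= 0.
    move=> L ML.
    have AL : 0 < AA L by apply: lt_le_trans AMpos (AA_mono ML).
    set cl := BB L / AA L.
    have QL : QQ L cl = (AA L * CC L - BB L ^+ 2) / AA L.
      by rewrite /QQ /cl; field; rewrite gt_eqF.
    have QL0 : QQ L cl <= 0 by rewrite QL pmulr_lle0 ?invr_gt0 // subr_le0.
    have := QQ_mono cl ML; rewrite QM z0 addr0 => hm.
    have hsq : (cl - c) ^+ 2 <= 0.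
      by rewrite -(pmulr_rle0 _ AMpos); apply: le_trans hm QL0.
    have : cl - c = 0.
      by apply/eqP; rewrite -sqrf_eq0 eq_le hsq sqr_ge0.
    by move/eqP; rewrite subr_eq0 => /eqP <-.
  pose k := Num.bound `|c|.
  have hk : `|c| < k%:R := archi_boundP (normr_ge0 c).
  exists (maxn M k.+1) => N hN.
  have MN : (M <= N)%N by apply: leq_trans hN; exact: leq_maxl.
  have kN : (k.+1 <= N)%N by apply: leq_trans hN; exact: leq_maxr.
  have tN : `|c| + 1 <= N%:R.
    apply: le_trans (_ : k.+1%:R <= N%:R); last by rewrite ler_nat.
    by rewrite -addn1 natrD lerD2r ltW.
  have AN1 : 1 <= AA N.
    apply/ler_addgt0Pr => e e0.
    have [N1 HN1] := Atail e0.
    have NL : (N <= maxn N N1)%N by exact: leq_maxl.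
    have h1 := AA_tail NL tN.
    have h2' := cL (maxn N N1) (leq_trans MN NL).
    have h3 := HN1 (maxn N N1) (leq_maxr _ _).
    lra.
  have hV := V_ge0 N (BB N).
  have hC := CC_ge0 N.
  nra.
Qed.

End AS.

Section Misc.
Context {R : realType}.

Lemma meas_lt {d'} {T' : measurableType d'} (f : T' -> R) (c : R) :
  measurable_fun setT f -> measurable [set x | c < f x].
Proof.
move=> mf; rewrite (_ : [set x | c < f x] = f @^-1` `]c, +oo[); last first.
  by apply/seteqP; split => w /=; rewrite in_itv /= andbT.
by rewrite -[X in measurable X]setTI; apply: mf.
Qed.

Lemma meas_le {d'} {T' : measurableType d'} (f : T' -> R) (c : R) :
  measurable_fun setT f -> measurable [set x | f x <= c].
Proof.
move=> mf; rewrite (_ : [set x | f x <= c] = f @^-1` `]-oo, c]); last first.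
  by apply/seteqP; split => w /=; rewrite in_itv /=.
by rewrite -[X in measurable X]setTI; apply: mf.
Qed.

Lemma meas_nlt {d'} {T' : measurableType d'} (f : T' -> R) (c : R) :
  measurable_fun setT f -> measurable [set x | c < `|f x|].
Proof.
move=> mf; apply: (@meas_lt _ _ (fun x => `|f x|)).
exact: (measurableT_comp (@normr_measurable R setT) mf).
Qed.

Lemma meas_nle {d'} {T' : measurableType d'} (f : T' -> R) (c : R) :
  measurable_fun setT f -> measurable [set x | `|f x| <= c].
Proof.
move=> mf; apply: (@meas_le _ _ (fun x => `|f x|)).
exact: (measurableT_comp (@normr_measurable R setT) mf).
Qed.

Lemma measurable_subpre (A : set R) : measurable A ->
  measurable [set z : R * R | A (z.1 - z.2)].
Proof.
move=> mA.
have mf : measurable_fun setT (fun z : R * R => z.1 - z.2).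
  by apply: measurable_funB; [exact: measurable_fst | exact: measurable_snd].
by have := mf measurableT A mA; rewrite setTI.
Qed.

End Misc.

Section Sym.
Context {d : measure_display} {T : measurableType d} {R : realType}.
Variable P : probability T R.

Lemma indep2C (U V : T -> R) : indep2 P U V -> indep2 P V U.
Proof. by move=> H A B mA mB; rewrite setIC H // muleC. Qed.

Lemma sym_zero (U V : T -> R) (mU : measurable_fun setT U) (mV : measurable_fun setT V) :
  indep2 P U V -> (forall A, measurable A -> P (U @^-1` A) = P (V @^-1` A)) ->
  forall c, Ex P (yt c \o (fun w => U w - V w)) = 0.
Proof.
move=> H HUV c.
have mD : measurable_fun setT (fun w => U w - V w) by exact: measurable_funB.
have mD' : measurable_fun setT (fun w => V w - U w) by exact: measurable_funB.
have law_eq : forall A, measurable A ->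
   P ((fun w => U w - V w) @^-1` A) = P ((fun w => V w - U w) @^-1` A).
  move=> A mA.
  have e1 : (fun w => U w - V w) @^-1` A = (fun w => (U w, V w)) @^-1` [set z | A (z.1 - z.2)] by [].
  have e2 : (fun w => V w - U w) @^-1` A = (fun w => (V w, U w)) @^-1` [set z | A (z.1 - z.2)] by [].
  rewrite e1 e2 (indep_law mU mV H (measurable_subpre mA)).
  rewrite (indep_law mV mU (indep2C H) (measurable_subpre mA)).
  apply: prod_law_eq; [exact: HUV | move=> B mB; exact/esym/HUV | exact: measurable_subpre].
have := Ex_law mD mD' law_eq (mbR_yt c).
have -> : yt c \o (fun w => V w - U w) = fun w => - (yt c \o (fun w => U w - V w)) w.
  apply/funext => w; rewrite /= /yt distrC.
  by case: ifP => _; rewrite ?opprB ?oppr0.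
rewrite ExN; last exact: mb_comp (mbR_yt c) mD.
by move=> h; lra.
Qed.

End Sym.

Unset Implicit Arguments. Set Strict Implicit. Set Printing Implicit Defensive.

Theorem lemma8p4 (d : measure_display) (T : measurableType d) (R : realType)
  (P : probability T R) (h hp hm : nat -> T -> R) :
  iid P h ->
  (* (h^+_n)_n and (h^-_n)_n: independent copies of (h_n)_n *)
  iid P (fun ib : bool * nat => if ib.1 then hp ib.2 else hm ib.2) ->
  same_law P (hp 0%N) (h 0%N) ->
  let hsym := fun n w => hp n w - hm n w in
  exists N0 : nat, forall N : nat, (N0 <= N)%N ->
    [/\ (v_N P h N 1 <= 2%:E * v_N P hsym (2 * N) 1)%E,
        v_N P hsym (2 * N) 1 = sigma_N P hsym (2 * N) 1,
        (tau_N P h N 1 <= 4%:E * tau_N P hsym N (1 / 2))%E &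
        (pi_N P h N 1 >= 2^-1%:E * pi_N P hsym N 2)%E].
Proof.
move=> [mh [ih lh]] [mY [iY lY]] H3 hsym.
have mhp : forall i, measurable_fun setT (hp i) := fun i => mY (true, i).
have mhm : forall i, measurable_fun setT (hm i) := fun i => mY (false, i).
have ihp : mutually_independent P hp := mi_restrict true iY.
have ihm : mutually_independent P hm := mi_restrict false iY.
have ind0 : indep2 P (hp 0%N) (hm 0%N) := mi_pair iY.
have Lph : forall i, same_law P (hp i) (h i).
  move=> i B mB; rewrite (lY (true, i) (true, 0%N) B mB) /=.
  by rewrite H3 // (lh 0%N i B mB).
have Lmh : forall i, same_law P (hm i) (h i).
  move=> i B mB; rewrite (lY (false, i) (true, 0%N) B mB) /=.
  by rewrite H3 // (lh 0%N i B mB).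
have Lmp0 : same_law P (hp 0%N) (hm 0%N).
  by move=> B mB; rewrite Lph // Lmh.
have mhs0 : measurable_fun setT (hsym 0%N) by exact: measurable_funB.
have sz : forall c, Ex P (yt c \o hsym 0%N) = 0 := sym_zero (mhp 0%N) (mhm 0%N) ind0 Lmp0.
have [NA HNA] := AS P (mh 0%N).
have h2 : (0:R) < 2^-1 by rewrite invr_gt0 ltr0n.
have [M HM] := Atail P (mh 0%N) h2.
have AM : 2^-1 <= AA P (h 0%N) M by have := HM M (leqnn M); lra.
exists (maxn NA (2 * M)) => N hN.
have hNA : (NA <= N)%N by apply: leq_trans hN; exact: leq_maxl.
have h2M : (2 * M <= N)%N by apply: leq_trans hN; exact: leq_maxr.
have varT : forall c, variance P (trunc (hsym 0%N) c) =
    (Ex P ((fun x => yt c x ^+ 2) \o hsym 0%N))%:E.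
  move=> c; change (trunc (hsym 0%N) c) with (yt c \o hsym 0%N).
  rewrite variance_Ex; last exact: mb_comp (mbR_yt c) mhs0.
  by rewrite sz expr0n /= subr0.
split.
- rewrite /v_N varT.
  have -> : variance P (trunc (h 0%N) (1 * N%:R)) =
     (CC P (h 0%N) N - BB P (h 0%N) N ^+ 2)%:E.
    rewrite mul1r; change (trunc (h 0%N) N%:R) with (yt N%:R \o h 0%N).
    by rewrite variance_Ex //; exact: mb_comp (mbR_yt _) (mh 0%N).
  set c2 := 1 * (2 * N)%:R.
  set E2 := Ex P ((fun x => yt c2 x ^+ 2) \o hsym 0%N).
  set A := AA P (h 0%N) N; set B := BB P (h 0%N) N; set C := CC P (h 0%N) N.
  have key : C - B ^+ 2 <= E2.
    pose G := fun w => yt N%:R (hp 0%N w) ^+ 2 * ind N%:R (hm 0%N w) +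
       yt N%:R (hm 0%N w) ^+ 2 * ind N%:R (hp 0%N w) -
       2 * (yt N%:R (hp 0%N w) * yt N%:R (hm 0%N w)).
    have hyp := fun f (hf : mbR f) => mb_comp hf (mhp 0%N).
    have hym := fun f (hf : mbR f) => mb_comp hf (mhm 0%N).
    have mb1 : mb (fun w => yt N%:R (hp 0%N w) ^+ 2 * ind N%:R (hm 0%N w)).
      exact: mbM (hyp _ (mbR_sq (mbR_yt _))) (hym _ (mbR_ind _)).
    have mb2 : mb (fun w => yt N%:R (hm 0%N w) ^+ 2 * ind N%:R (hp 0%N w)).
      exact: mbM (hym _ (mbR_sq (mbR_yt _))) (hyp _ (mbR_ind _)).
    have mb3 : mb (fun w => yt N%:R (hp 0%N w) * yt N%:R (hm 0%N w)).
      exact: mbM (hyp _ (mbR_yt _)) (hym _ (mbR_yt _)).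
    have mbG : mb G.
      apply: mbB; first exact: mbD.
      by apply: mbM; [exact: mb_cst | exact: mb3].
    have GE : Ex P G = 2 * (C * A) - 2 * (B * B).
      rewrite /G (ExB P (mbD mb1 mb2)); last by apply: mbM; [exact: mb_cst | exact: mb3].
      rewrite (ExD P mb1 mb2) (ExZ P 2 mb3).
      rewrite (Ex_indep (mhp 0%N) (mhm 0%N) ind0 (mbR_sq (mbR_yt _)) (mbR_ind _)).
      rewrite (Ex_indep (mhm 0%N) (mhp 0%N) (indep2C ind0) (mbR_sq (mbR_yt _)) (mbR_ind _)).
      rewrite (Ex_indep (mhp 0%N) (mhm 0%N) ind0 (mbR_yt _) (mbR_yt _)).
      rewrite (Ex_law (mhp 0%N) (mh 0%N) (Lph 0%N) (mbR_sq (mbR_yt N%:R))).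
      rewrite (Ex_law (mhp 0%N) (mh 0%N) (Lph 0%N) (mbR_ind N%:R)).
      rewrite (Ex_law (mhp 0%N) (mh 0%N) (Lph 0%N) (mbR_yt N%:R)).
      rewrite (Ex_law (mhm 0%N) (mh 0%N) (Lmh 0%N) (mbR_sq (mbR_yt N%:R))).
      rewrite (Ex_law (mhm 0%N) (mh 0%N) (Lmh 0%N) (mbR_ind N%:R)).
      rewrite (Ex_law (mhm 0%N) (mh 0%N) (Lmh 0%N) (mbR_yt N%:R)).
      rewrite /A /B /C /AA /BB /CC; ring.
    have GT : Ex P G <= E2.
      apply: Ex_le => //; first exact: mb_comp (mbR_sq (mbR_yt _)) mhs0.
      move=> w; rewrite /G /= /yt /ind /hsym.
      set a := hp 0%N w; set b := hm 0%N w.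
      have sq := sqr_ge0 (if `|a - b| <= c2 then a - b else 0).
      have [ha|ha] := boolP (`|a| <= N%:R); have [hb|hb] := boolP (`|b| <= N%:R); try nra.
      have hab : `|a - b| <= c2.
        rewrite /c2 mul1r natrM; apply: le_trans (ler_normB a b) _.
        have := lerD ha hb; lra.
      rewrite hab; nra.
    have := HNA N hNA; rewrite -/A -/B -/C => hAS.
    move: GE GT; nra.
  rewrite -!EFinM lee_fin.
  have -> : 2 * ((2 * N)%:R^-1 * E2) = N%:R^-1 * E2.
    by rewrite natrM invfM !mulrA mulrV ?mul1r // unitfE pnatr_eq0.
  by apply: ler_wpM2l => //; rewrite invr_ge0.
- rewrite /v_N /sigma_N varT; congr (_ * _)%E.
  set c := (1 * (2 * N)%:R).
  have -> : (fun w => if `|hsym 0%N w| <= c then hsym 0%N w ^+ 2 else 0) =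
            (fun x => yt c x ^+ 2) \o hsym 0%N.
    by apply/funext => w; rewrite /= /yt; case: ifP => _; rewrite ?expr0n.
  rewrite expectation_Ex //; exact: mb_comp (mbR_sq (mbR_yt c)) mhs0.
- rewrite /tau_N.
  have mnh := fun f (mf : measurable_fun setT f) => measurableT_comp (@normr_measurable R setT) mf.
  set S1 := [set w | 1 * N%:R < `|h 0%N w|].
  set S2 := [set w | 1 / 2 * N%:R < `|hsym 0%N w|].
  have mS1 : measurable S1 by exact: meas_nlt.
  have mS2 : measurable S2 by exact: meas_nlt.
  have fin : forall A, measurable A -> P A \is a fin_num by move=> A mA; exact: fin_num_measure.
  have mA1 : measurable [set x : R | 1 * N%:R < `|x|].
    by have := @meas_lt R _ R (fun x : R => `|x|) (1 * N%:R); apply; exact: normr_measurable.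
  have mB1 : measurable [set x : R | `|x| <= M%:R].
    by have := @meas_le R _ R (fun x : R => `|x|) M%:R; apply; exact: normr_measurable.
  set T1 := hp 0%N @^-1` [set x : R | 1 * N%:R < `|x|].
  set T2 := hm 0%N @^-1` [set x : R | `|x| <= M%:R].
  have mT1 : measurable T1 by exact: mpre.
  have mT2 : measurable T2 by exact: mpre.
  have eS1 : P S1 = P T1 by rewrite /T1 (Lph 0%N _ mA1).
  have PT2 : 2^-1 <= fine (P T2).
    rewrite /T2 (Lmh 0%N _ mB1).
    suff -> : fine (P (h 0%N @^-1` [set x : R | `|x| <= M%:R])) = AA P (h 0%N) M by [].
    rewrite /AA -Ex_indic; last exact: mpre.
    by apply: Ex_ext => w; rewrite /= /ind indicE /=; case: ifP => h0;
      [rewrite mem_set | rewrite memNset //= h0].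
  have eI : P (T1 `&` T2) = (P T1 * P T2)%E by exact: ind0.
  have sub : T1 `&` T2 `<=` S2.
    move=> w [/= w1 w2]; rewrite /hsym /=.
    have e1 : `|hp 0%N w| <= `|hp 0%N w - hm 0%N w| + `|hm 0%N w|.
      by apply: le_trans (ler_normD _ _); rewrite subrK.
    have e2 : (2 * M)%:R <= N%:R :> R by rewrite ler_nat.
    rewrite natrM in e2; move: w1 w2; rewrite /S2 /T1 /T2 /hsym /= => w1 w2; lra.
  have k1 : fine (P (T1 `&` T2)) <= fine (P S2).
    apply: fine_le; [apply: fin; exact: measurableI | exact: fin |].
    by apply: le_measure => //; rewrite inE //; exact: measurableI.
  have k2 : fine (P (T1 `&` T2)) = fine (P T1) * fine (P T2) by rewrite eI fineM //; exact: fin.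
  have p1 : 0 <= fine (P T1) by apply: fine_ge0.
  have key : fine (P S1) <= 2 * fine (P S2) by rewrite eS1; nra.
  rewrite -(fineK (fin _ mS1)) -(fineK (fin _ mS2)) -!EFinM lee_fin.
  have n0 : 0 <= N%:R :> R by [].
  have p2 : 0 <= fine (P S1) by apply: fine_ge0.
  nra.
- rewrite /pi_N.
  have fin : forall A, measurable A -> P A \is a fin_num by move=> A mA; exact: fin_num_measure.
  have dsym : d_N P hsym N = 0.
    rewrite /d_N; change (trunc (hsym 0%N) N%:R) with (yt N%:R \o hsym 0%N).
    by rewrite expectation_Ex ?sz //; exact: mb_comp (mbR_yt _) mhs0.
  rewrite dsym; set dd := d_N P h N.
  set C := [set s : R | 1 < `|N%:R^-1 * s - dd|].
  have mC : measurable C.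
    have := @meas_nlt R _ R (fun s : R => N%:R^-1 * s - dd) 1; apply.
    apply: measurable_funB; last exact: measurable_cst.
    by apply: measurable_funM; [exact: measurable_cst | exact: measurable_id].
  have e0 : P [set w | 1 < `|N%:R^-1 * (\sum_(n < N) h n w) - dd|] = P (Sm h N @^-1` C) by [].
  have ep : P (Sm hp N @^-1` C) = P (Sm h N @^-1` C).
    exact: (law_sums mhp mh ihp ih (fun i A mA => Lph i A mA) N mC).
  have em : P (Sm hm N @^-1` C) = P (Sm h N @^-1` C).
    exact: (law_sums mhm mh ihm ih (fun i A mA => Lmh i A mA) N mC).
  have mU1 : measurable (Sm hp N @^-1` C) by apply: mpre => //; exact: mSm.
  have mU2 : measurable (Sm hm N @^-1` C) by apply: mpre => //; exact: mSm.
  set Ssym := [set w | 2 < `|N%:R^-1 * (\sum_(n < N) hsym n w) - 0|].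
  have mSsym : measurable Ssym.
    have := @meas_nlt _ _ T (fun w => N%:R^-1 * (\sum_(n < N) hsym n w) - 0) 2; apply.
    apply: measurable_funB; last exact: measurable_cst.
    apply: measurable_funM; first exact: measurable_cst.
    have := mSm (fun i => measurable_funB (mhp i) (mhm i)) N; exact.
  have sub : Ssym `<=` (Sm hp N @^-1` C) `|` (Sm hm N @^-1` C).
    move=> w; rewrite /Ssym /C /hsym /Sm /= subr0 sumrB.
    set a := N%:R^-1 * (\sum_(i < N) hp i w) - dd.
    set b := N%:R^-1 * (\sum_(i < N) hm i w) - dd.
    have eab : N%:R^-1 * (\sum_(i < N) hp i w - \sum_(i < N) hm i w) = a - b.
      by rewrite /a /b; ring.
    rewrite eab => hab.
    have [ha|ha] := boolP (1 < `|a|); first by left.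
    have [hb|hb] := boolP (1 < `|b|); first by right.
    exfalso; move: ha hb; rewrite -!leNgt => ha hb.
    have := ler_normB a b; lra.
  have k1 : (P Ssym <= P (Sm h N @^-1` C) + P (Sm h N @^-1` C))%E.
    rewrite -{1}ep -em; apply: le_trans (measureU2 P mU1 mU2).
    apply: le_measure => //; rewrite inE //; exact: measurableU.
  rewrite e0.
  have f1 := fin _ mSsym.
  have f2 : P (Sm h N @^-1` C) \is a fin_num by apply: fin; apply: mpre => //; exact: mSm.
  move: k1; rewrite -(fineK f1) -(fineK f2) -EFinD -EFinM !lee_fin => k1.
  lra.
Qed.
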